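(* Let $\mathcal{L}=(L,\wedge,\vee,0,1)$ be a complete lattice and let $C\subseteq L$ be a chain consisting of strongly irreducible elements of $L$. Then $\bigwedge C$ is strongly irreducible in $L$.
   Context: An element $p$ of a lattice is strongly irreducible if for all $a,b\in L$: $a\wedge b\leq p$ implies $a\leq p$ or $b\leq p$. *)

(* Defs.v *)
From mathcomp Require Import all_boot all_order.
Set Implicit Arguments. Unset Strict Implicit. Unset Printing Implicit Defensive.
Import Order.TTheory.
Local Open Scope order_scope.

Definition is_glb (d : Order.disp_t) (L : latticeType d) (C : L -> Prop) (m : L) : Prop :=
  (forall x, C x -> m <= x) /\ (forall y, (forall x, C x -> y <= x) -> y <= m).

Definition complete_inf (d : Order.disp_t) (L : latticeType d) (inf : (L -> Prop) -> L) : Prop :=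
  forall C : L -> Prop, is_glb C (inf C).

Definition strongly_irreducible (d : Order.disp_t) (L : latticeType d) (p : L) : Prop :=
  forall a b : L, a `&` b <= p -> a <= p \/ b <= p.

Definition is_chain (d : Order.disp_t) (L : latticeType d) (C : L -> Prop) : Prop :=
  forall x y, C x -> C y -> x <= y \/ y <= x.

(* Main.v *)
Require Import Defs.
From mathcomp Require Import all_boot all_order.
From Stdlib Require Import Classical.
Import Order.TTheory.
Local Open Scope order_scope.

Theorem proposition1p13 (d : Order.disp_t) (L : tbLatticeType d)
  (inf : (L -> Prop) -> L) (Hinf : complete_inf inf)
  (C : L -> Prop) (HC : is_chain C)
  (Hirr : forall c, C c -> strongly_irreducible c) :
  strongly_irreducible (inf C).
Proof.
  move=> a b Hab.
  have [Hlb Hgl] := Hinf C.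
  apply: NNPP; move=> Hn.
  apply Hn; left; apply Hgl => x Cx.
  apply: NNPP; move=> Hax.
  apply Hn; right; apply Hgl => y Cy.
  apply: NNPP; move=> Hby.
  have Hx := Hirr x Cx a b (le_trans Hab (Hlb x Cx)).
  have Hy := Hirr y Cy a b (le_trans Hab (Hlb y Cy)).
  case: (HC x y Cx Cy) => Hxy.
  - case: Hx => H; first by apply Hax.
    by apply Hby; apply: le_trans H Hxy.
  - case: Hy => H; last by apply Hby.
    by apply Hax; apply: le_trans H Hxy.
Qed.
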